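(* Let $\Phi$ be a probabilistic cellular automaton on $\mathcal{A}^{\mathbb{Z}}$ of radius $r$, i.e. with neighborhood $\mathcal{N}\subset[\![-r,r]\!]$. Then the action $\mu\mapsto\Phi\mu$ is $2^r$-Lipschitz on $\mathcal{M}(\mathcal{A}^{\mathbb{Z}})$ for the distance $d_{\mathcal{M}}$, i.e. $d_{\mathcal{M}}(\Phi\mu,\Phi\nu)\le 2^r d_{\mathcal{M}}(\mu,\nu)$ for all $\mu,\nu\in\mathcal{M}(\mathcal{A}^{\mathbb{Z}})$.
   Context: $\mathcal{A}$ is a finite alphabet. A PCA with finite neighborhood $\mathcal{N}\subset\mathbb{Z}$ is given by a stochastic matrix $\varphi:\mathcal{A}^{\mathcal{N}}\times\mathcal{A}\to[0,1]$ (rows summing to $1$); its transition kernel is $\Phi(x,[w]_U)=\prod_{i\in U}\varphi(x_{i+\mathcal{N}},w_i)$ for finite $U\subset\mathbb{Z}$, $w\in\mathcal{A}^U$, and it acts on probability measures by $\Phi\mu(E)=\int\Phi(x,E)\,d\mu(x)$. $\mathcal{M}(\mathcal{A}^{\mathbb{Z}})$ is the set of shift-invariant Borel probability measures on $\mathcal{A}^{\mathbb{Z}}$, and $d_{\mathcal{M}}(\mu,\nu)=\sum_{n\ge0}2^{-n}\|\mu-\nu\|_{[-n,n]}$ with $\|\mu-\nu\|_U=\frac12\sum_{u\in\mathcal{A}^U}|\mu([u])-\nu([u])|$, $[u]$ the cylinder $\{x:x_U=u\}$. *)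

(* Defs.v *)
From HB Require Import structures.
From mathcomp Require Import all_boot all_order all_algebra.
From mathcomp Require Import all_classical all_reals all_analysis.
From mathcomp Require Import finmap.
Set Implicit Arguments. Unset Strict Implicit. Unset Printing Implicit Defensive.
Import Order.TTheory GRing.Theory Num.Theory.
Local Open Scope classical_set_scope.
Local Open Scope ring_scope.

Section PCA.
Variables (A : finType) (a0 : A).

(* (indexed by the inhabitant a0, used as the default point of A^Z) *)
Definition rawconf (a : A) : Type := int -> A.
HB.instance Definition _ := Choice.on (rawconf a0).
HB.instance Definition _ := isPointed.Build (rawconf a0) (fun _ => a0).

(* Elementary cylinders {x | x_i = a}; they generate the product
   (= Borel, A finite, Z countable) sigma-algebra of A^Z. *)
Definition elem_cylinders : set (set (rawconf a0)) :=
  [set E | exists (i : int) (a : A), E = [set x | x i = a]].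

Definition conf := g_sigma_algebraType elem_cylinders.

Definition shift (x : conf) : conf := fun i => x (i + 1)%R.

Definition shift_invariant (R : realType) (mu : probability conf R) :=
  forall E : set conf, measurable E -> mu (shift @^-1` E) = mu E.

(* Positions of the window [-n, n], indexed by 'I_(2n+1). *)
Definition win (n : nat) (k : 'I_(n.*2.+1)) : int := (k%:Z - n%:Z)%R.

Definition cyl (n : nat) (u : {ffun 'I_(n.*2.+1) -> A}) : set conf :=
  [set x | forall k, x (win k) = u k].

Definition tvn (R : realType) (P Q : forall n, {ffun 'I_(n.*2.+1) -> A} -> R)
    (n : nat) : R :=
  2^-1 * \sum_(u : {ffun 'I_(n.*2.+1) -> A}) `|P n u - Q n u|.

Definition dM (R : realType) (P Q : forall n, {ffun 'I_(n.*2.+1) -> A} -> R) : \bar R :=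
  (\sum_(0 <= n <oo) ((2 ^- n) * tvn P Q n)%:E)%E.

Definition cylval (R : realType) (mu : probability conf R) :
    forall n, {ffun 'I_(n.*2.+1) -> A} -> R :=
  fun n u => fine (mu (cyl u)).

Definition pat (N : {fset int}) (x : conf) (i : int) : {ffun N -> A} :=
  [ffun k : N => x (i + val k)%R].

(* Transition kernel on cylinders:
   Phi(x, [w]_U) = prod_{i in U} phi(x_{i+N}, w_i), with U = [-n,n]. *)
Definition kernel_cyl (R : realType) (N : {fset int}) (phi : {ffun N -> A} -> A -> R)
    (n : nat) (w : {ffun 'I_(n.*2.+1) -> A}) (x : conf) : R :=
  \prod_(k : 'I_(n.*2.+1)) phi (pat N x (win k)) (w k).

(* Cylinder values of Phi mu: Phi mu([w]) = int Phi(x,[w]) dmu(x). *)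
Definition pca_cylval (R : realType) (N : {fset int}) (phi : {ffun N -> A} -> A -> R)
    (mu : probability conf R) : forall n, {ffun 'I_(n.*2.+1) -> A} -> R :=
  fun n w => fine (\int[mu]_x (kernel_cyl phi w x)%:E).

Definition stochastic (R : realType) (N : {fset int}) (phi : {ffun N -> A} -> A -> R) :=
  forall p, (forall a, 0 <= phi p a) /\ \sum_(a : A) phi p a = 1.

End PCA.

(* Main.v *)
Require Import Defs.
From HB Require Import structures.
From mathcomp Require Import all_boot all_order all_algebra.
From mathcomp Require Import all_classical all_reals all_analysis.
From mathcomp Require Import finmap.
From mathcomp Require Import zify ring lra.
From mathcomp Require Import measurable_realfun.
Import Order.TTheory GRing.Theory Num.Theory.
Local Open Scope ring_scope.
Local Open Scope classical_set_scope.
Set Implicit Arguments. Unset Strict Implicit. Unset Printing Implicit Defensive.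

Section S.
Variables (A : finType) (a0 : A).
Local Notation conf := (@conf A a0).

Lemma win_inj n : injective (@win n).
Proof. move=> k k'; rewrite /win => /addIr /eqP; rewrite eqz_nat => /eqP h; exact: val_inj. Qed.

Lemma win_ex m (i : int) : (- (m%:Z) <= i)%R -> (i <= m%:Z)%R -> exists k : 'I_(m.*2.+1), win k = i.
Proof.
move=> h1 h2.
have h : (absz (i + m%:Z)%R < m.*2.+1)%N by lia.
exists (Ordinal h); rewrite /win /=. lia.
Qed.

Lemma mcyl n (u : {ffun 'I_(n.*2.+1) -> A}) : measurable (@cyl A a0 n u).
Proof.
have -> : @cyl A a0 n u = \bigcap_(k in [set: 'I_(n.*2.+1)]) [set x : conf | x (win k) = u k].
  apply/seteqP; split => x /=; first by move=> h k _; exact: h.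
  by move=> h k; exact: h.
apply: fin_bigcap_measurable; first exact: finite_finset.
move=> k _; apply: sub_sigma_algebra; by exists (win k), (u k).
Qed.

Definition ext m (v : {ffun 'I_(m.*2.+1) -> A}) : conf :=
  fun i => if [pick k | win k == i] is Some k then v k else a0.

Lemma ext_win m (v : {ffun 'I_(m.*2.+1) -> A}) k : ext v (win k) = v k.
Proof.
rewrite /ext; case: pickP => [k' /eqP/win_inj -> //|/(_ k)]; by rewrite eqxx.
Qed.

Lemma cyl_ext m (v : {ffun 'I_(m.*2.+1) -> A}) (x : conf) i :
  @cyl A a0 m v x -> (- (m%:Z) <= i)%R -> (i <= m%:Z)%R -> x i = ext v i.
Proof.
move=> hx h1 h2; have [k <-] := win_ex h1 h2; rewrite ext_win; exact: hx.
Qed.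

Variables (R : realType) (r : nat) (N : {fset int}) (phi : {ffun N -> A} -> A -> R).
Hypothesis hN : forall i : int, i \in N -> (- (r%:Z) <= i)%R /\ (i <= r%:Z)%R.

Lemma kernel_local n (w : {ffun 'I_(n.*2.+1) -> A}) (v : {ffun 'I_((n + r).*2.+1) -> A}) (x : conf) :
  @cyl A a0 _ v x -> kernel_cyl phi w x = kernel_cyl phi w (ext v).
Proof.
move=> hx; rewrite /kernel_cyl; apply: eq_bigr => k _; congr (phi _ _).
apply/ffunP => j; rewrite !ffunE; apply: (cyl_ext hx).
- have [h1 h2] := hN (valP j); have := ltn_ord k; rewrite /win.
  move: (\val j) (nat_of_ord k) h1 h2 => a b; rewrite -muln2; lia.
- have [h1 h2] := hN (valP j); have := ltn_ord k; rewrite /win.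
  move: (\val j) (nat_of_ord k) h1 h2 => a b; rewrite -muln2; lia.
Qed.

Hypothesis hphi : stochastic phi.

Lemma kernel_ge0 n (w : {ffun 'I_(n.*2.+1) -> A}) (x : conf) : 0 <= kernel_cyl phi w x.
Proof. by apply: prodr_ge0 => k _; case: (hphi (pat N x (win k))). Qed.

Lemma kernel_decomp n (w : {ffun 'I_(n.*2.+1) -> A}) (x : conf) :
  kernel_cyl phi w x = \sum_(v : {ffun 'I_((n + r).*2.+1) -> A})
     kernel_cyl phi w (ext v) * \1_(@cyl A a0 _ v) x.
Proof.
set v0 := [ffun k : 'I_((n + r).*2.+1) => x (win k)].
have hx : @cyl A a0 _ v0 x by move=> k; rewrite ffunE.
rewrite (bigD1 v0) //= big1 ?addr0.
  by rewrite indicE mem_set // mulr1 (kernel_local w hx).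
move=> v hv; rewrite indicE memNset ?mulr0 //.
move=> hxv; move/eqP: hv; apply; apply/ffunP => k; rewrite ffunE; exact/esym/hxv.
Qed.

Local Open Scope ereal_scope.

Lemma integral_kernel n (w : {ffun 'I_(n.*2.+1) -> A}) (mu : probability conf R) :
  \int[mu]_x (kernel_cyl phi w x)%:E = \sum_(v : {ffun 'I_((n + r).*2.+1) -> A})
     (kernel_cyl phi w (ext v))%:E * mu (@cyl A a0 _ v).
Proof.
under eq_integral do rewrite kernel_decomp -sumEFin.
rewrite ge0_integral_sum //.
- apply: eq_bigr => v _; under eq_integral do rewrite EFinM.
  rewrite ge0_integralZl_EFin ?kernel_ge0 //.
  + by rewrite integral_indic ?setIT //; exact: mcyl.
  + apply/measurable_EFinP. apply: measurable_indic. exact: mcyl.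
- move=> v; apply/measurable_EFinP; apply: measurable_funM => //.
  apply: measurable_indic; exact: mcyl.
- by move=> v x _; rewrite lee_fin mulr_ge0 // kernel_ge0.
Qed.


Lemma pca_cylvalE n (w : {ffun 'I_(n.*2.+1) -> A}) (mu : probability conf R) :
  pca_cylval phi mu w = (\sum_(v : {ffun 'I_((n + r).*2.+1) -> A})
     kernel_cyl phi w (ext v) * cylval mu v)%R.
Proof.
rewrite /pca_cylval integral_kernel.
have h v : mu (@cyl A a0 _ v) = (cylval mu v)%:E.
  by rewrite /cylval fineK // fin_num_measure //; exact: mcyl.
under eq_bigr do rewrite h -EFinM.
by rewrite sumEFin.
Qed.

Lemma kernel_sum1 n (x : conf) :
  (\sum_(w : {ffun 'I_(n.*2.+1) -> A}) kernel_cyl phi w x = 1)%R.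
Proof.
rewrite /kernel_cyl.
rewrite -(bigA_distr_bigA (fun (k : 'I_(n.*2.+1)) (a : A) => phi (pat N x (win k)) a)) big1 // => k _.
exact: (hphi _).2.
Qed.

Local Close Scope ereal_scope.

Lemma tvn_le (mu nu : probability conf R) n :
  tvn (pca_cylval phi mu) (pca_cylval phi nu) n <= tvn (@cylval A a0 R mu) (cylval nu) (n + r).
Proof.
rewrite /tvn; apply: ler_wpM2l; first by rewrite invr_ge0.
under eq_bigr do rewrite !pca_cylvalE -sumrB.
apply: (le_trans (ler_sum _ (fun w _ => ler_norm_sum _ _ _))).
rewrite exchange_big /=; apply: ler_sum => v _.
under eq_bigr do rewrite -mulrBr normrM (ger0_norm (kernel_ge0 _ _)).
by rewrite -mulr_suml kernel_sum1 mul1r.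
Qed.


Lemma tvn_ge0 (P Q : forall n, {ffun 'I_(n.*2.+1) -> A} -> R) n : 0 <= tvn P Q n.
Proof. by rewrite /tvn mulr_ge0 ?invr_ge0 // sumr_ge0. Qed.

Local Open Scope ereal_scope.

Lemma main_le (mu nu : probability conf R) :
  dM (pca_cylval phi mu) (pca_cylval phi nu) <= (2 ^+ r)%:E * dM (cylval mu) (cylval nu).
Proof.
rewrite /dM.
set t := tvn (@cylval A a0 R mu) (cylval nu).
have t0 m : (0 <= t m)%R by exact: tvn_ge0.
have g0 m : 0 <= (((2:R) ^- m) * t m)%:E by rewrite lee_fin mulr_ge0 // invr_ge0 exprn_ge0.
apply: (@le_trans _ _ (\sum_(0 <= n <oo) (((2:R) ^- n) * t (n + r)%N)%:E)).
  apply: lee_nneseries => [i _ _|i _]; first by rewrite lee_fin mulr_ge0 ?tvn_ge0 // invr_ge0 exprn_ge0.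
  by rewrite lee_fin ler_wpM2l ?invr_ge0 ?exprn_ge0 // tvn_le.
rewrite (@eq_eseriesr _ _ (fun n => (2 ^+ r)%:E * (((2:R) ^- (n + r)%N) * t (n + r)%N)%:E)); last first.
  move=> n _; have e : ((2:R) ^- n = 2 ^+ r * 2 ^- (n + r))%R.
    by rewrite exprD invfM mulrCA mulfV ?mulr1 // expf_neq0.
  by rewrite -EFinM e; congr EFin; rewrite -mulrA.
rewrite (@nneseriesZl R (fun n => (((2:R) ^- (n + r)%N) * t (n + r)%N)%:E)) // lee_wpmul2l ?lee_fin ?exprn_ge0 //.
rewrite (@nneseries_addn R (fun m => (((2:R) ^- m) * t m)%:E) r) //.
rewrite [X in _ <= X](nneseries_split _ r) // add0n leeDr //.
by apply: sume_ge0 => m _.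
Qed.

End S.

Unset Implicit Arguments.
Local Close Scope classical_set_scope.

Theorem mainTheorem4 (R : realType) (A : finType) (a0 : A)
    (r : nat) (N : {fset int}) (phi : {ffun N -> A} -> A -> R) :
  stochastic phi ->
  (forall i : int, i \in N -> (- (r%:Z) <= i)%R /\ (i <= r%:Z)%R) ->
  forall mu nu : probability (@conf A a0) R,
    shift_invariant mu -> shift_invariant nu ->
    (dM (pca_cylval phi mu) (pca_cylval phi nu) <= (2 ^+ r)%:E * dM (cylval mu) (cylval nu))%E.
Proof.
move=> hphi hN mu nu _ _; exact: main_le.
Qed.
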